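(* For every integer $t \geq 1$, no graph in $\mathcal{H}_t$ has an odd $4$-coloring (and hence no graph in $\mathcal{H}_t$ has a PCF $4$-coloring).
   Context: For $t\ge 1$, $\mathcal{H}_t$ is the class of finite simple graphs having a connected component that consists of exactly $t$ blocks, each of which is a $5$-cycle. An odd $c$-coloring is a proper coloring with at most $c$ colors such that every non-isolated vertex has a color appearing an odd number of times in its open neighborhood. A PCF $c$-coloring is a proper coloring with at most $c$ colors such that every non-isolated vertex has a color appearing exactly once in its open neighborhood. *)

(* Defs.v *)
From mathcomp Require Import all_boot.
Set Implicit Arguments. Unset Strict Implicit. Unset Printing Implicit Defensive.

Section Graphs.
Variable T : finType.
Variable e : rel T.

Definition simple_graph : Prop := symmetric e /\ irreflexive e.

Definition induced_rel (S : {set T}) : rel T :=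
  [rel x y | [&& x \in S, y \in S & e x y]].

(* G[S] is connected (the empty vertex set counts as connected) *)
Definition connected_set (S : {set T}) : Prop :=
  forall x y, x \in S -> y \in S -> connect (induced_rel S) x y.

Definition nonseparable (S : {set T}) : Prop :=
  S != set0 /\ connected_set S /\ forall v, v \in S -> connected_set (S :\ v).

(* vertex set of a block: a maximal connected subgraph without a cut vertex
   (blocks are induced subgraphs, so they are determined by their vertex set) *)
Definition is_block (B : {set T}) : Prop :=
  nonseparable B /\ forall B' : {set T}, B \subset B' -> nonseparable B' -> B' = B.

Definition induces_C5 (B : {set T}) : Prop :=
  exists f : 'I_5 -> T, injective f /\ B = [set f i | i in 'I_5] /\
    forall i j : 'I_5, e (f i) (f j) =
      (val j == (val i).+1 %% 5) || (val i == (val j).+1 %% 5).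

Definition is_component (C : {set T}) : Prop :=
  exists x, C = [set y | connect e x y].

Definition in_H (t : nat) : Prop :=
  exists C : {set T}, is_component C /\
    exists Bs : {set {set T}},
      #|Bs| = t /\
      (forall B : {set T}, B \in Bs <-> (is_block B /\ B \subset C)) /\
      (forall B : {set T}, B \in Bs -> induces_C5 B).

Definition nbhd (v : T) : {set T} := [set u | e v u].

Definition proper_col (k : nat) (c : T -> 'I_k) : Prop :=
  forall x y, e x y -> c x != c y.

Definition non_isolated (v : T) : Prop := exists u, e v u.

Definition odd_coloring (k : nat) (c : T -> 'I_k) : Prop :=
  proper_col c /\ forall v, non_isolated v ->
    exists a : 'I_k, odd #|[set u in nbhd v | c u == a]|.

Definition pcf_coloring (k : nat) (c : T -> 'I_k) : Prop :=
  proper_col c /\ forall v, non_isolated v ->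
    exists a : 'I_k, #|[set u in nbhd v | c u == a]| = 1.

End Graphs.

(* Main.v *)
Require Import Defs.
From mathcomp Require Import all_boot.
From mathcomp Require Import zify.
From Stdlib Require Import Classical.
Set Implicit Arguments. Unset Strict Implicit. Unset Printing Implicit Defensive.

Definition adj (i j : 'I_5) : bool := (val j == (val i).+1 %% 5) || (val i == (val j).+1 %% 5).
Definition o (n : nat) (H : n < 5) : 'I_5 := Ordinal H.
Ltac cas l := case: l => [[|[|[|[|[|?]]]]] ?] //.
Ltac solvel := let l := fresh in move=> l; cas l.
Ltac wit := first [ solve [exists (@o 0 isT); solvel] | solve [exists (@o 1 isT); solvel] | solve [exists (@o 2 isT); solvel]
  | solve [exists (@o 3 isT); solvel] | solve [exists (@o 4 isT); solvel] ].
Lemma nb5 (i : 'I_5) : exists p q : 'I_5, p != q /\ forall l, adj i l = (l == p) || (l == q).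
Proof.
cas i.
- exists (@o 1 isT), (@o 4 isT); split => //; solvel.
- exists (@o 2 isT), (@o 0 isT); split => //; solvel.
- exists (@o 3 isT), (@o 1 isT); split => //; solvel.
- exists (@o 4 isT), (@o 2 isT); split => //; solvel.
- exists (@o 0 isT), (@o 3 isT); split => //; solvel.
Qed.
Lemma sp5 (i j : 'I_5) : i != j -> ~~ adj i j -> exists m : 'I_5, forall l, adj m l = (l == i) || (l == j).
Proof. cas i; cas j; move=> h1 h2; try (by move: h1); try (by move: h2); wit. Qed.

Section G.
Variable T : finType.
Variable e : rel T.
Hypothesis sym_e : symmetric e.
Hypothesis irr_e : irreflexive e.
Implicit Types (S X Y B : {set T}) (x y z p q u v w : T).

Lemma ind_sym S : symmetric (induced_rel e S).
Proof. by move=> x y; rewrite /induced_rel /= sym_e; case: (x \in S); case: (y \in S). Qed.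

Lemma con_sym S x y : connect (induced_rel e S) x y -> connect (induced_rel e S) y x.
Proof. by rewrite (sym_connect_sym (@ind_sym S)). Qed.

Lemma con_lift S S' x y : S \subset S' -> connect (induced_rel e S) x y -> connect (induced_rel e S') x y.
Proof.
move=> sub; apply: connect_sub => a b /= /and3P[ha hb hab]; apply: connect1.
by apply/and3P; split => //; apply: (subsetP sub).
Qed.

Lemma cs_lift S S' x y : connected_set e S -> x \in S -> y \in S -> S \subset S' ->
  connect (induced_rel e S') x y.
Proof. by move=> cS hx hy sub; apply: con_lift sub (cS _ _ hx hy). Qed.

Lemma cs_union S1 S2 z : connected_set e S1 -> connected_set e S2 -> z \in S1 -> z \in S2 ->
  connected_set e (S1 :|: S2).
Proof.
move=> c1 c2 z1 z2.
have hz : forall x, x \in S1 :|: S2 -> connect (induced_rel e (S1 :|: S2)) z x.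
  move=> x; rewrite inE => /orP[hx|hx].
    by apply: (cs_lift c1 z1 hx); apply: subsetUl.
  by apply: (cs_lift c2 z2 hx); apply: subsetUr.
move=> x y hx hy; apply: connect_trans (hz _ hy); exact: con_sym (hz _ hx).
Qed.

Lemma cs_D1 S w : nonseparable e S -> connected_set e (S :\ w).
Proof.
case=> _ [cS rS]; case hw: (w \in S); first exact: rS.
have -> : S :\ w = S.
  by apply/setP => z; rewrite !inE; case: eqP => // ->; rewrite hw.
exact: cS.
Qed.

Lemma ns_union X Y p q : nonseparable e X -> nonseparable e Y -> p != q ->
  p \in X -> q \in X -> p \in Y -> q \in Y -> nonseparable e (X :|: Y).
Proof.
move=> nX nY pq pX qX pY qY; split; last split.
- by apply/set0Pn; exists p; rewrite inE pX.
- by apply: (cs_union nX.2.1 nY.2.1 pX pY).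
- move=> w _; rewrite setDUl.
  pose z := if w == p then q else p.
  have zw : z != w.
    rewrite /z; case: (w =P p) => [E|E]; last by apply/eqP => E2; apply: E.
    by rewrite E eq_sym.
  have zpq : (z == p) || (z == q) by rewrite /z; case: (w =P p) => _; rewrite eqxx ?orbT.
  have zX : z \in X :\ w.
    by rewrite !inE zw /=; case/orP: zpq => /eqP->.
  have zY : z \in Y :\ w.
    by rewrite !inE zw /=; case/orP: zpq => /eqP->.
  exact: (cs_union (cs_D1 (w:=w) nX) (cs_D1 (w:=w) nY) zX zY).
Qed.

Lemma block_share B1 B2 p q : is_block e B1 -> is_block e B2 -> p != q ->
  p \in B1 -> q \in B1 -> p \in B2 -> q \in B2 -> B1 = B2.
Proof.
move=> [n1 m1] [n2 m2] pq p1 q1 p2 q2.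
have nU := ns_union n1 n2 pq p1 q1 p2 q2.
have e1 := m1 _ (subsetUl B1 B2) nU.
have e2 := m2 _ (subsetUr B1 B2) nU.
by rewrite -e1 e2.
Qed.

Lemma extend_block S : nonseparable e S -> exists B, is_block e B /\ S \subset B.
Proof.
have : #|~: S| < #|T|.+1 by rewrite ltnS max_card.
move: #|T|.+1 => n; elim: n S => [//|n IH] S hS nS.
case: (classic (forall B', S \subset B' -> nonseparable e B' -> B' = S)) => [H|H].
  by exists S; split => //; split.
have [B' hB'] := not_all_ex_not _ _ H.
have [sub hB2] : S \subset B' /\ nonseparable e B' /\ B' <> S.
  by apply: NNPP => K; apply: hB'; move=> a b; apply: NNPP => K2; apply: K.
have [nB ne] := hB2.
have pr : S \proper B' by rewrite properEneq sub andbT; apply/eqP => h; apply: ne.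
have lt : #|~: B'| < #|~: S| by apply: proper_card; rewrite properC.
have [B [bB sB]] := IH B' (leq_trans lt (ltnSE hS)) nB.
by exists B; split => //; apply: subset_trans sB.
Qed.

Lemma edge_ns u v : e u v -> nonseparable e [set u; v].
Proof.
move=> huv; have uv : u != v by apply/eqP => h; move: huv; rewrite h irr_e.
split; last split.
- by apply/set0Pn; exists u; rewrite !inE eqxx.
- move=> x y; rewrite !inE => /orP[]/eqP-> /orP[]/eqP->; rewrite ?connect0 //.
    by apply: connect1; apply/and3P; split; rewrite ?inE ?eqxx ?orbT.
  by apply: connect1; apply/and3P; split; rewrite ?inE ?eqxx ?orbT // sym_e.
- move=> w hw x y hx hy.
  move: hw hx hy; rewrite !inE => /orP[]/eqP-> /andP[xw /orP[]/eqP xE] /andP[yw /orP[]/eqP yE];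
    subst; rewrite ?connect0 //; try (by rewrite eqxx in xw); by rewrite eqxx in yw.
Qed.

Section Cyc.
Variable k : nat.
Variable Bf : nat -> {set T}.
Variable vf : nat -> T.
Hypothesis hk : 1 < k.
Hypothesis hBp : forall n, Bf (n + k) = Bf n.
Hypothesis hvp : forall n, vf (n + k) = vf n.
Hypothesis hv1 : forall n, vf n \in Bf n.
Hypothesis hv2 : forall n, vf n.+1 \in Bf n.
Hypothesis hinj : forall i j, i < k -> j < k -> vf i = vf j -> i = j.
Hypothesis hns : forall n, nonseparable e (Bf n).

Definition U := \bigcup_(i < k) Bf i.

Lemma Bf_sub n : n < k + k -> Bf n \subset U.
Proof.
move=> hn; case: (ltnP n k) => h.
  by apply: (bigcup_sup (Ordinal h)).
have -> : Bf n = Bf (n - k) by rewrite -(hBp (n - k)) subnK.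
have h2 : n - k < k by lia.
by apply: (bigcup_sup (Ordinal h2)).
Qed.

Lemma chain (D : {set T}) j : j < k -> (forall n, j < n < j + k -> vf n \notin D) ->
  (forall n, connected_set e (Bf n :\: D)) -> connected_set e (U :\: D).
Proof.
move=> hj hD cB.
pose b := vf j.+1.
have hb : b \notin D by apply: hD; lia.
have cl : forall m, m < k -> forall y, y \in Bf (j + m) :\: D ->
    connect (induced_rel e (U :\: D)) b y.
  elim=> [|m IH] hm y hy.
    apply: (cs_lift (cB (j + 0)) _ hy); first by rewrite !inE hb addn0 hv2.
    by apply: setSD; apply: Bf_sub; lia.
  have hvm : vf (j + m).+1 \notin D by apply: hD; lia.
  apply: connect_trans (IH (ltnW hm) (vf (j + m).+1) _) _.
    by rewrite inE hvm hv2.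
  apply: (cs_lift (cB (j + m.+1)) _ hy).
    by rewrite inE hvm -addnS hv1.
  by apply: setSD; apply: Bf_sub; lia.
have all : forall y, y \in U :\: D -> connect (induced_rel e (U :\: D)) b y.
  move=> y; rewrite inE => /andP[yD /bigcupP[i _ yi]].
  have hik := ltn_ord i; case: (leqP j i) => hji.
    apply: (cl (i - j)); first lia.
    by rewrite subnKC // inE yD yi.
  apply: (cl (i + k - j)); first lia.
  have -> : j + (i + k - j) = i + k by lia.
  by rewrite hBp inE yD yi.
move=> x y hx hy; apply: connect_trans (all _ hy); exact: con_sym (all _ hx).
Qed.

Lemma cyc_ns : nonseparable e U.
Proof.
split; last split.
- apply/set0Pn; exists (vf 0); apply: (subsetP (Bf_sub (_ : 0 < k + k))); [lia | exact: hv1].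
- rewrite -(setD0 U); apply: (chain (j:=0)); first lia.
    by move=> n _; rewrite inE.
  by move=> n; rewrite setD0; exact: (hns n).2.1.
- move=> w _.
  have cB : forall n, connected_set e (Bf n :\ w) by move=> n; apply: cs_D1.
  case: (pickP [pred j : 'I_k | vf j == w]) => [j /= /eqP hj | hno].
    apply: (chain (j:=j)) => //; move=> n hn; rewrite inE -hj; apply/negP => /eqP E.
    case: (ltnP n k) => hnk.
      have := hinj hnk (ltn_ord j) E; lia.
    have E2 : vf (n - k) = vf j by rewrite -E -(hvp (n - k)) subnK.
    have hjk := ltn_ord j.
    have hnk2 : n - k < k by lia.
    have := hinj hnk2 (ltn_ord j) E2; lia.
  apply: (chain (j:=0)) => //; first lia.
  move=> n hn; rewrite inE; apply/negP => /eqP E.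
  have hnk : n < k by lia.
  by have := hno (Ordinal hnk); rewrite /= E eqxx.
Qed.
End Cyc.

Section Main.
Variable C : {set T}.
Variable x0 : T.
Hypothesis hC : C = [set y | connect e x0 y].
Variable Bs : {set {set T}}.
Hypothesis hBs : forall B, B \in Bs <-> is_block e B /\ B \subset C.
Hypothesis hC5 : forall B, B \in Bs -> induces_C5 e B.
Variable c : T -> 'I_4.
Hypothesis hodd : odd_coloring e c.

Lemma M1 B v u : B \in Bs -> v \in B -> e v u -> exists2 B', B' \in Bs & (v \in B') && (u \in B').
Proof.
move=> hB hv hvu.
have [B' [bl sub]] := extend_block (edge_ns hvu).
have vB' : v \in B' by apply: (subsetP sub); rewrite !inE eqxx.
have uB' : u \in B' by apply: (subsetP sub); rewrite !inE eqxx orbT.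
exists B'; last by rewrite vB' uB'.
apply/hBs; split => //.
have vC : v \in C by have [_ sC] := (hBs B).1 hB; apply: (subsetP sC).
apply/subsetP => y hy; move: vC; rewrite hC !inE => vC.
apply: connect_trans vC _.
apply: connect_sub (bl.1.2.1 v y vB' hy) => a b /and3P[_ _ hab]; exact: connect1.
Qed.

Lemma M2 B v : B \in Bs -> v \in B -> exists p q, p != q /\ nbhd e v :&: B = [set p; q].
Proof.
move=> hB hv; have [f [finj [hBf hf]]] := hC5 hB.
subst B; move: hv => /imsetP[i _ ->].
have [p [q [pq hl]]] := nb5 i.
exists (f p), (f q); split; first by rewrite (inj_eq finj).
apply/setP => u; rewrite !inE; apply/andP/idP.
  case=> hu /imsetP[l _ E]; subst u; move: hu; rewrite hf.
  have -> : ((val l == (val i).+1 %% 5) || (val i == (val l).+1 %% 5)) = adj i l by [].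
  by rewrite hl => /orP[]/eqP->; rewrite eqxx ?orbT.
move=> /orP[]/eqP->; (split; last by apply: imset_f); rewrite hf;
  have -> : forall l, ((val l == (val i).+1 %% 5) || (val i == (val l).+1 %% 5)) = adj i l by [];
  by rewrite hl eqxx ?orbT.
Qed.

Definition specialb v B := [forall u in nbhd e v :&: B, forall w in nbhd e v :&: B, c u == c w].

Lemma M3 B : B \in Bs -> exists2 m, m \in B & specialb m B.
Proof.
move=> hB; have [f [finj [hBf hf]]] := hC5 hB.
have : ~~ injectiveb (fun i => c (f i)).
  apply/negP => /injectiveP inj; have := @leq_card _ _ _ inj; rewrite !card_ord.
  by [].
case/injectivePn => i [j ij cij].
have nadj : ~~ adj i j.
  apply/negP => aij; have := hodd.1 (f i) (f j); rewrite hf.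
  by move=> /(_ aij); rewrite cij eqxx.
have [m hm] := sp5 ij nadj.
exists (f m); first by rewrite hBf imset_f.
apply/forallP => u; apply/implyP => hu; apply/forallP => w; apply/implyP => hw.
have key : forall z, z \in nbhd e (f m) :&: B -> c z = c (f i).
  move=> z; rewrite !inE hBf => /andP[hz /imsetP[l _ E]]; subst z; move: hz.
  rewrite hf; have -> : ((val l == (val m).+1 %% 5) || (val m == (val l).+1 %% 5)) = adj m l by [].
  by rewrite hm => /orP[]/eqP->.
by rewrite (key _ hu) (key _ hw).
Qed.

Lemma M4 B0 v : B0 \in Bs -> v \in B0 -> exists2 B, B \in Bs & (v \in B) && ~~ specialb v B.
Proof.
move=> hB0 hv0.
have [p [q [pq hpq]]] := M2 hB0 hv0.
have hp : e v p.
  have : p \in nbhd e v :&: B0 by rewrite hpq !inE eqxx.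
  by rewrite !inE => /andP[].
have [a ha] := hodd.2 v (ex_intro _ p hp).
apply: NNPP => H.
have H' : forall B, B \in Bs -> v \in B -> specialb v B.
  move=> B hB hvB; apply: NNPP => K; apply: H; exists B => //; rewrite hvB; exact/negP.
move: ha; set K := [set u in nbhd e v | c u == a].
pose FB := fun B : {set T} => if (B \in Bs) && (v \in B) then K :&: B else set0.
have KU : K = \bigcup_B FB B.
  apply/setP => u; apply/idP/bigcupP.
    move=> hu; have : e v u by move: hu; rewrite !inE => /andP[].
    move=> /(M1 hB0 hv0) [B' hB' /andP[hv' hu']].
    by exists B' => //; rewrite /FB hB' hv' inE hu hu'.
  by case=> B _; rewrite /FB; case: ifP => _; rewrite ?inE // => /andP[].
have disj : forall B1 B2, B1 != B2 -> [disjoint FB B1 & FB B2].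
  move=> B1 B2 ne; rewrite -setI_eq0; apply/eqP/setP => u; rewrite inE [u \in set0]inE.
  apply/negP => /andP[]; rewrite /FB.
  case: ifP => [/andP[h1 v1]|_]; last by rewrite inE.
  case: ifP => [/andP[h2 v2]|_]; last by move=> _; rewrite inE.
  rewrite !inE => /andP[/andP[eu _] u1] /andP[_ u2].
  have uv : v != u by apply/eqP => E; move: eu; rewrite E irr_e.
  have := block_share ((hBs _).1 h1).1 ((hBs _).1 h2).1 uv v1 u1 v2 u2.
  by move=> E; move: ne; rewrite E eqxx.
have cardK : #|K| = \sum_B #|FB B|.
  rewrite -sum1_card KU partition_disjoint_bigcup //.
  by apply: eq_bigr => B _; rewrite sum1_card.
have evenFB : forall B, ~~ odd #|FB B|.
  move=> B; rewrite /FB; case: ifP => [/andP[hB hvB]|_]; last by rewrite cards0.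
  have [p' [q' [pq' hpq']]] := M2 hB hvB.
  have sp := H' B hB hvB.
  have hp' : p' \in nbhd e v :&: B by rewrite hpq' !inE eqxx.
  have hq' : q' \in nbhd e v :&: B by rewrite hpq' !inE eqxx orbT.
  have cpq : c p' = c q' by apply/eqP; move/forallP: sp => /(_ p') /implyP /(_ hp') /forallP /(_ q') /implyP /(_ hq').
  have -> : K :&: B = if c p' == a then [set p'; q'] else set0.
    apply/setP => u; have E : (u \in nbhd e v :&: B) = (u \in [set p'; q']) by rewrite hpq'.
    move: E; rewrite !inE => E.
    rewrite andbAC E; case: ifP => ca.
      rewrite !inE; apply/idP/idP => [/andP[]//|h]; rewrite h /=.
      by case/orP: h => /eqP->; rewrite -?cpq ca.
    by rewrite inE; apply/negP => /andP[] /orP[]/eqP->; rewrite -?cpq ca.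
  by case: (c p' == a); rewrite ?cards2 ?pq' ?cards0.
rewrite cardK; apply/negP.
apply: (big_ind (fun n => is_true (~~ odd n))) => //.
  by move=> x y hx hy; rewrite oddD (negbTE hx) (negbTE hy).
Qed.

Lemma M5 : Bs != set0 -> False.
Proof.
case/set0Pn => B0 hB0.
have [f [_ [hBf _]]] := hC5 hB0.
pose v0 := f ord0.
have v0B : v0 \in B0 by rewrite hBf imset_f.
pose good v := exists2 B, B \in Bs & v \in B.
pose gsel v := odflt set0 [pick B in Bs | (v \in B) && ~~ specialb v B].
pose ssel B := odflt x0 [pick m in B | specialb m B].
have gP : forall v, good v -> [/\ gsel v \in Bs, v \in gsel v & ~~ specialb v (gsel v)].
  move=> v [B hB hv]; rewrite /gsel; case: pickP => [B' /andP[h1 /andP[h2 h3]]|none] //=.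
  have [B'' h1 h2] := M4 hB hv.
  by have := none B''; rewrite /= h1 h2.
have sP : forall B, B \in Bs -> ssel B \in B /\ specialb (ssel B) B.
  move=> B hB; rewrite /ssel; case: pickP => [m /andP[h1 h2]|none] //=.
  have [m h1 h2] := M3 hB.
  by have := none m; rewrite /= h1 h2.
pose H v := ssel (gsel v).
have Hgood : forall v, good v -> good (H v).
  move=> v gv; have [g1 _ _] := gP v gv; exists (gsel v) => //; exact: (sP _ g1).1.
have Hne : forall v, good v -> H v != v.
  move=> v gv; have [g1 _ g3] := gP v gv; apply/eqP => E.
  have := (sP _ g1).2; rewrite /H in E; rewrite E; by rewrite (negbTE g3).
have igood : forall n v, good v -> good (iter n H v).
  by elim=> [|n IH] v gv //=; apply: Hgood; apply: IH.
have : ~~ injectiveb (fun i : 'I_#|T|.+1 => iter i H v0).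
  apply/negP => /injectiveP inj; have := @leq_card _ _ _ inj.
  by rewrite card_ord ltnn.
case/injectivePn => i [j ij eqij].
have gv0 : good v0 by exists B0.
have [y [d [hd0 [hy gy]]]] : exists y d, 0 < d /\ iter d H y = y /\ good y.
  case: (ltngtP i j) => h.
  - exists (iter i H v0), (j - i); split; first by rewrite subn_gt0.
    by rewrite -iterD subnK ?(ltnW h) // -eqij; split => //; apply: igood.
  - exists (iter j H v0), (i - j); split; first by rewrite subn_gt0.
    by rewrite -iterD subnK ?(ltnW h) // eqij; split => //; apply: igood.
  - by rewrite (ord_inj h) eqxx in ij.
have ex : exists p : nat, (0 < p) && (iter p H y == y) by exists d; rewrite hd0 hy eqxx.
case: (ex_minnP ex) => k /andP[hk0 /eqP hky] hmin.
have hk : 1 < k.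
  case: k hk0 hky hmin => [|[|k]] // _ hky _.
  by have := Hne y gy; rewrite /= in hky; rewrite hky eqxx.
pose vf n := iter n H y.
pose Bf n := gsel (vf n).
have gvf : forall n, good (vf n) by move=> n; apply: igood.
have hBp : forall n, Bf (n + k) = Bf n by move=> n; rewrite /Bf /vf iterD hky.
have hvp : forall n, vf (n + k) = vf n by move=> n; rewrite /vf iterD hky.
have hBs' : forall n, Bf n \in Bs by move=> n; have [] := gP _ (gvf n).
have hv1 : forall n, vf n \in Bf n by move=> n; have [] := gP _ (gvf n).
have hv2 : forall n, vf n.+1 \in Bf n by move=> n; rewrite /vf iterS; exact: (sP _ (hBs' n)).1.
have lt_ne : forall i j, i < j -> j < k -> vf i <> vf j.
  move=> a b hab hbk E.
  have E2 : iter (k - b + a) H y = y.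
    by rewrite iterD -/(vf a) E /vf -iterD subnK // ltnW.
  have := hmin (k - b + a); rewrite E2 eqxx andbT.
  have -> : 0 < k - b + a by rewrite addn_gt0 subn_gt0 hbk.
  by move=> /(_ isT); lia.
have hinj : forall i j, i < k -> j < k -> vf i = vf j -> i = j.
  move=> a b ha hb E; case: (ltngtP a b) => // h.
    by case: (lt_ne _ _ h hb E).
  by case: (lt_ne _ _ h ha (esym E)).
have hns : forall n, nonseparable e (Bf n) by move=> n; exact: ((hBs _).1 (hBs' n)).1.1.
have nU := cyc_ns hk hBp hvp hv1 hv2 hinj hns.
have [[ns0 mx0] _] := (hBs _).1 (hBs' 0).
have [[ns1 mx1] _] := (hBs _).1 (hBs' 1).
have s0 : Bf 0 \subset U k Bf by apply: (Bf_sub hk hBp); lia.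
have s1 : Bf 1 \subset U k Bf by apply: (Bf_sub hk hBp); lia.
have EU := mx0 _ s0 nU.
rewrite EU in s1.
have E01 := mx1 _ s1 ns0.
have : vf 2 = vf 1 by rewrite /vf iterS -/(vf 1) /H -/(Bf 1) -E01.
by apply/eqP; rewrite /vf iterS; apply: Hne; apply: igood.
Qed.

End Main.

End G.

Theorem mainTheorem4 :
  forall (t : nat) (T : finType) (e : rel T),
    1 <= t -> simple_graph e -> in_H e t ->
    (~ exists c : T -> 'I_4, odd_coloring e c) /\
    (~ exists c : T -> 'I_4, pcf_coloring e c).
Proof.
move=> t T e ht [sym_e irr_e] [C [[x0 hC] [Bs [hcard [hBs hC5]]]]].
have ne : Bs != set0 by rewrite -card_gt0 hcard.
have noodd : ~ exists c : T -> 'I_4, odd_coloring e c.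
  by case=> c hc; apply: (M5 sym_e irr_e hC hBs hC5 hc ne).
split => //; case=> c [hp hc]; apply: noodd; exists c; split => //.
by move=> v hv; have [a ha] := hc v hv; exists a; rewrite ha.
Qed.
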